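(* For every sequent $\Gamma\Rightarrow\Delta$: if $\mathsf{Grz_{Seq}}+\mathsf{cut}\vdash\Gamma\Rightarrow\Delta$, then $\Gamma\Rightarrow\Delta$ is provable in $\mathsf{Grz}_\infty+\mathsf{cut}$.
   Context: Formulas are built from $\bot$ and atomic propositions using $\to$ and $\Box$. A sequent is $\Gamma\Rightarrow\Delta$ with $\Gamma,\Delta$ finite multisets of formulas; $\Box\Pi$ denotes the multiset $\{\Box B:B\in\Pi\}$. Common rules: $(\to_L)$ from $\Gamma,B\Rightarrow\Delta$ and $\Gamma\Rightarrow A,\Delta$ infer $\Gamma,A\to B\Rightarrow\Delta$; $(\to_R)$ from $\Gamma,A\Rightarrow B,\Delta$ infer $\Gamma\Rightarrow A\to B,\Delta$; $(\mathsf{refl})$ from $\Gamma,B,\Box B\Rightarrow\Delta$ infer $\Gamma,\Box B\Rightarrow\Delta$; $(\mathsf{cut})$ from $\Gamma\Rightarrow A,\Delta$ and $\Gamma,A\Rightarrow\Delta$ infer $\Gamma\Rightarrow\Delta$. The finite-proof calculus $\mathsf{Grz_{Seq}}+\mathsf{cut}$ has initial sequents $\Gamma,A\Rightarrow A,\Delta$ (any $A$) and $\Gamma,\bot\Rightarrow\Delta$, the rules $(\to_L),(\to_R),(\mathsf{refl}),(\mathsf{cut})$ and $(\Box_{\mathsf{Grz}})$: from $\Box\Pi,\Box(A\to\Box A)\Rightarrow A$ infer $\Gamma,\Box\Pi\Rightarrow\Box A,\Delta$. The calculus $\mathsf{Grz}_\infty+\mathsf{cut}$ has initial sequents $\Gamma,p\Rightarrow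 p,\Delta$ ($p$ atomic) and $\Gamma,\bot\Rightarrow\Delta$, the rules $(\to_L),(\to_R),(\mathsf{refl}),(\mathsf{cut})$ and $(\Box)$: from left premise $\Gamma,\Box\Pi\Rightarrow A,\Delta$ and right premise $\Box\Pi\Rightarrow A$ infer $\Gamma,\Box\Pi\Rightarrow\Box A,\Delta$. Proofs in $\mathsf{Grz}_\infty+\mathsf{cut}$ are $\infty$-proofs: possibly infinite trees of sequents built by these rules, with leaves labelled by initial sequents, in which every infinite branch passes through a right premise of $(\Box)$ infinitely often; a sequent is provable if it labels the root of an $\infty$-proof. *)

(* Defs.v *)
From Stdlib Require Import List Permutation.
Import ListNotations.

Inductive form : Type :=
| Bot : form
| Var : nat -> form
| Imp : form -> form -> form
| Box : form -> form.

(* A sequent  Gamma => Delta ; the lists are read as multisets: every rule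
   below only constrains them up to Permutation. *)
Definition sequent : Type := (list form * list form)%type.

Definition boxes (Pi : list form) : list form := map Box Pi.

Inductive GrzSeq_cut : list form -> list form -> Prop :=
| gs_init : forall G D G0 D0 A,
    Permutation G (A :: G0) -> Permutation D (A :: D0) -> GrzSeq_cut G D
| gs_bot : forall G D G0,
    Permutation G (Bot :: G0) -> GrzSeq_cut G D
| gs_impL : forall G D G0 A B,
    Permutation G (Imp A B :: G0) ->
    GrzSeq_cut (B :: G0) D -> GrzSeq_cut G0 (A :: D) -> GrzSeq_cut G D
| gs_impR : forall G D D0 A B,
    Permutation D (Imp A B :: D0) ->
    GrzSeq_cut (A :: G) (B :: D0) -> GrzSeq_cut G D
| gs_refl : forall G D G0 B,
    Permutation G (Box B :: G0) ->
    GrzSeq_cut (B :: Box B :: G0) D -> GrzSeq_cut G D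
| gs_cut : forall G D A,
    GrzSeq_cut G (A :: D) -> GrzSeq_cut (A :: G) D -> GrzSeq_cut G D
| gs_boxGrz : forall G D G0 D0 Pi A,
    Permutation G (G0 ++ boxes Pi) -> Permutation D (Box A :: D0) ->
    GrzSeq_cut (boxes Pi ++ [Box (Imp A (Box A))]) [A] -> GrzSeq_cut G D.

Inductive rkind : Type := RAx | RBot | RImpL | RImpR | RRefl | RCut | RBox.

(* [step r s ps] : the list of premises [ps] (in order) and conclusion [s]
   form an instance of rule [r].  For RBox, premise 0 is the left premise
   and premise 1 is the right premise. *)
Definition step (r : rkind) (s : sequent) (ps : list sequent) : Prop :=
  let (G, D) := s in
  match r with
  | RAx => ps = [] /\ exists p G0 D0,
      Permutation G (Var p :: G0) /\ Permutation D (Var p :: D0)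
  | RBot => ps = [] /\ exists G0, Permutation G (Bot :: G0)
  | RImpL => exists A B G0, Permutation G (Imp A B :: G0) /\
      ps = [(B :: G0, D); (G0, A :: D)]
  | RImpR => exists A B D0, Permutation D (Imp A B :: D0) /\
      ps = [(A :: G, B :: D0)]
  | RRefl => exists B G0, Permutation G (Box B :: G0) /\
      ps = [(B :: Box B :: G0, D)]
  | RCut => exists A, ps = [(G, A :: D); (A :: G, D)]
  | RBox => exists G0 D0 Pi A,
      Permutation G (G0 ++ boxes Pi) /\ Permutation D (Box A :: D0) /\
      ps = [(G, A :: D0); (boxes Pi, [A])]
  end.

(* A (possibly infinite) tree of sequents: nodes are addressed by lists of
   child indices (address of child i of node p is i :: p); each node carries
   its sequent and the rule applied there. *)
Definition ptree : Type := list nat -> option (sequent * rkind).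

Definition locally_correct (T : ptree) : Prop :=
  (forall p s r, T p = Some (s, r) ->
     exists ps, step r s ps /\
       forall i, (i < length ps -> exists r', T (i :: p) = Some (nth i ps ([], []), r'))
              /\ (length ps <= i -> T (i :: p) = None))
  /\ (forall p i, T p = None -> T (i :: p) = None).

Fixpoint addr (f : nat -> nat) (n : nat) : list nat :=
  match n with
  | 0 => []
  | S m => f m :: addr f m
  end.

Definition infinite_branch (T : ptree) (f : nat -> nat) : Prop :=
  forall n, T (addr f n) <> None.

Definition box_right_step (T : ptree) (f : nat -> nat) (n : nat) : Prop :=
  f n = 1 /\ exists s, T (addr f n) = Some (s, RBox).

Definition progressing (T : ptree) : Prop :=
  forall f, infinite_branch T f ->
    forall N, exists n, N <= n /\ box_right_step T f n.

Definition inf_proof (T : ptree) : Prop := locally_correct T /\ progressing T.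

Definition GrzInf_cut (G D : list form) : Prop :=
  exists T r, inf_proof T /\ T [] = Some ((G, D), r).

(* Main.v *)
Require Import Defs.
From Stdlib Require Import List Permutation Arith Lia.
From Stdlib Require Import ClassicalEpsilon Classical.
Import ListNotations.

Inductive gnode (St : Type) := Top (s : St) | Sub (k : nat) (q : list nat).
Arguments Top {St} s.
Arguments Sub {St} k q.

Definition glab {St} (labS : St -> sequent * rkind) (Tk : nat -> ptree) (x : gnode St)
  : option (sequent * rkind) :=
  match x with Top s => Some (labS s) | Sub k q => Tk k q end.

Definition gch {St} (chS : St -> nat -> option (St + nat)) (x : gnode St) (i : nat) : option (gnode St) :=
  match x with
  | Top s => match chS s i with
             | Some (inl s') => Some (Top s')
             | Some (inr k) => Some (Sub k [])
             | None => None end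
  | Sub k q => Some (Sub k (i :: q))
  end.

Fixpoint nodeAt {St} (chS : St -> nat -> option (St + nat)) (x : gnode St) (p : list nat)
  : option (gnode St) :=
  match p with
  | [] => Some x
  | i :: p' => match nodeAt chS x p' with Some y => gch chS y i | None => None end
  end.

Definition gtree {St} labS chS Tk (s0 : St) : ptree :=
  fun p => match nodeAt chS (Top s0) p with Some y => glab labS Tk y | None => None end.

Definition root_ok {St} (labS : St -> sequent * rkind) (Tk : nat -> ptree)
  (i : nat) (ps : list sequent) (y : St + nat) : Prop :=
  match y with
  | inl s' => fst (labS s') = nth i ps ([], [])
  | inr k => exists r', Tk k [] = Some (nth i ps ([], []), r')
  end.

Lemma nodeAt_sub {St} chS (x : gnode St) f m k q :
  nodeAt chS x (addr f m) = Some (Sub k q) ->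
  forall n, nodeAt chS x (addr f (n + m)) = Some (Sub k (addr (fun j => f (j + m)) n ++ q)).
Proof. intros H n. induction n; simpl. exact H. rewrite IHn. reflexivity. Qed.

Lemma first_sub {St} chS (s0 : St) f : forall m,
  (exists k q, nodeAt chS (Top s0) (addr f m) = Some (Sub k q)) ->
  exists m' k, nodeAt chS (Top s0) (addr f m') = Some (Sub k []).
Proof.
  induction m as [|m IH]; intros [k [q H]]; simpl in H.
  - discriminate.
  - destruct (nodeAt chS (Top s0) (addr f m)) as [[s|k' q']|] eqn:E.
    + simpl in H. destruct (chS s (f m)) as [[s'|k'']|] eqn:E2; try discriminate.
      exists (S m), k''. simpl. rewrite E. simpl. rewrite E2. reflexivity.
    + apply IH. eauto.
    + discriminate.
Qed.

Definition stfun {St} chS (s0 : St) f n : St :=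
  match nodeAt chS (Top s0) (addr f n) with Some (Top s) => s | _ => s0 end.

Lemma graft {St} (labS : St -> sequent * rkind) chS Tk :
  (forall k, inf_proof (Tk k)) ->
  (forall s, exists ps, step (snd (labS s)) (fst (labS s)) ps /\
     forall i, (i < length ps -> exists y, chS s i = Some y /\ root_ok labS Tk i ps y)
            /\ (length ps <= i -> chS s i = None)) ->
  (forall (st : nat -> St) (f : nat -> nat),
     (forall n, chS (st n) (f n) = Some (inl (st (S n)))) ->
     forall N, exists n, N <= n /\ f n = 1 /\ snd (labS (st n)) = RBox) ->
  forall s0, GrzInf_cut (fst (fst (labS s0))) (snd (fst (labS s0))).
Proof.
  intros HT HS Hprog s0.
  exists (gtree labS chS Tk s0), (snd (labS s0)). split; [split|].
  - split.
    + intros p s r Hp. unfold gtree in Hp.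
      destruct (nodeAt chS (Top s0) p) as [y|] eqn:Ey; [|discriminate].
      destruct y as [s'|k q]; simpl in Hp.
      * injection Hp as Hp.
        destruct (HS s') as [ps [Hst Hch]]. rewrite Hp in Hst. simpl in Hst.
        exists ps. split; [exact Hst|]. intros i. split.
        -- intros Hi. destruct (proj1 (Hch i) Hi) as [y [Ey' Hy]].
           unfold gtree; simpl. rewrite Ey. simpl. rewrite Ey'.
           destruct y as [s''|k]; simpl in *.
           ++ exists (snd (labS s'')). rewrite <- Hy. destruct (labS s''); reflexivity.
           ++ exact Hy.
        -- intros Hi. unfold gtree; simpl. rewrite Ey. simpl. rewrite (proj2 (Hch i) Hi). reflexivity.
      * destruct (HT k) as [[Hlc Hpc] _]. destruct (Hlc q s r Hp) as [ps [Hst Hch]].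
        exists ps. split; [exact Hst|]. intros i. unfold gtree; simpl. rewrite Ey. simpl. apply Hch.
    + intros p i Hp. unfold gtree in *. simpl.
      destruct (nodeAt chS (Top s0) p) as [y|] eqn:Ey; [|reflexivity].
      destruct y as [s'|k q]; simpl in *; [discriminate|].
      destruct (HT k) as [[_ Hpc] _]. apply Hpc; exact Hp.
  - intros f Hinf N.
    assert (Hsome : forall n, exists y, nodeAt chS (Top s0) (addr f n) = Some y).
    { intros n. specialize (Hinf n). unfold gtree in Hinf.
      destruct (nodeAt chS (Top s0) (addr f n)); eauto; congruence. }
    destruct (classic (exists m k q, nodeAt chS (Top s0) (addr f m) = Some (Sub k q))) as [Hex|Hno].
    + destruct Hex as [m Hm]. destruct (first_sub chS s0 f m Hm) as [m' [k' Hm']].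
      assert (Hg : forall n, gtree labS chS Tk s0 (addr f (n + m')) = Tk k' (addr (fun j => f (j + m')) n)).
      { intros n. unfold gtree. rewrite (nodeAt_sub _ _ _ _ _ _ Hm' n). simpl. rewrite app_nil_r. reflexivity. }
      destruct (HT k') as [_ Hpk].
      assert (Hinfg : infinite_branch (Tk k') (fun j => f (j + m'))).
      { intros n. rewrite <- Hg. apply Hinf. }
      destruct (Hpk _ Hinfg N) as [n [HNn [Hgn [s Hs]]]].
      exists (n + m'). split. lia. split. exact Hgn. exists s. rewrite Hg. exact Hs.
    + assert (Htop : forall n, nodeAt chS (Top s0) (addr f n) = Some (Top (stfun chS s0 f n))).
      { intros n. destruct (Hsome n) as [y Hy]. unfold stfun. rewrite Hy. destruct y.
        reflexivity. exfalso; apply Hno; eauto. }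
      assert (Hch : forall n, chS (stfun chS s0 f n) (f n) = Some (inl (stfun chS s0 f (S n)))).
      { intros n. pose proof (Htop (S n)) as H. simpl in H. rewrite Htop in H. simpl in H.
        destruct (chS (stfun chS s0 f n) (f n)) as [[s'|k]|]; congruence. }
      destruct (Hprog _ f Hch N) as [n [HNn [Hfn Hr]]].
      exists n. split; [exact HNn|]. split; [exact Hfn|]. exists (fst (labS (stfun chS s0 f n))).
      unfold gtree. rewrite Htop. simpl. rewrite <- Hr. destruct (labS (stfun chS s0 f n)); reflexivity.
  - unfold gtree. simpl. destruct (labS s0) as [[G D] r]; reflexivity.
Qed.

Definition empty_tree : ptree := fun _ => None.

Lemma empty_inf : inf_proof empty_tree.
Proof.
  split; [split|].
  - intros p s r H; discriminate.
  - intros; reflexivity.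
  - intros f Hinf. exfalso. apply (Hinf 0). reflexivity.
Qed.

Lemma choose_trees (P : nat -> ptree -> Prop) :
  (forall k, exists T, P k T) -> exists Tk : nat -> ptree, forall k, P k (Tk k).
Proof.
  intros H. exists (fun k => proj1_sig (constructive_indefinite_description _ (H k))).
  intros k. apply proj2_sig.
Qed.

Lemma rule_closed r G D ps : step r (G, D) ps ->
  (forall i, i < length ps -> GrzInf_cut (fst (nth i ps ([],[]))) (snd (nth i ps ([],[])))) ->
  GrzInf_cut G D.
Proof.
  intros Hst Hps.
  assert (HT : exists Tk : nat -> ptree, forall k, inf_proof (Tk k) /\
     (k < length ps -> exists r', Tk k [] = Some (nth k ps ([],[]), r'))).
  { apply (choose_trees (fun k T => inf_proof T /\ (k < length ps -> exists r', T [] = Some (nth k ps ([],[]), r')))).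
    intros k. destruct (lt_dec k (length ps)) as [Hk|Hk].
    - destruct (Hps k Hk) as [T [r' [HT HT0]]]. exists T. split; auto. exists r'.
      rewrite HT0. destruct (nth k ps ([],[])); reflexivity.
    - exists empty_tree. split. apply empty_inf. intros; lia. }
  destruct HT as [Tk HTk].
  apply (graft (fun _ : unit => ((G, D), r))
               (fun _ i => if i <? length ps then Some (inr i) else None) Tk).
  - intros k; apply HTk.
  - intros s. exists ps. split; [exact Hst|]. intros i. split.
    + intros Hi. exists (inr i). split.
      * apply Nat.ltb_lt in Hi. rewrite Hi. reflexivity.
      * simpl. apply HTk. exact Hi.
    + intros Hi. assert (Hb : (i <? length ps) = false) by (apply Nat.ltb_ge; exact Hi).
      rewrite Hb. reflexivity.
  - intros st f Hch. exfalso. specialize (Hch 0). destruct (f 0 <? length ps); discriminate.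
  - exact tt.
Qed.

Lemma ident A : forall G D G0 D0, Permutation G (A :: G0) -> Permutation D (A :: D0) ->
  GrzInf_cut G D.
Proof.
  induction A as [|n|A1 IH1 A2 IH2|A IH]; intros G D G0 D0 HG HD.
  - apply (rule_closed RBot G D []). simpl. split; [reflexivity|]. exists G0; exact HG.
    intros i Hi; simpl in Hi; lia.
  - apply (rule_closed RAx G D []). simpl. split; [reflexivity|]. exists n, G0, D0; auto.
    intros i Hi; simpl in Hi; lia.
  - apply (rule_closed RImpR G D [(A1 :: G, A2 :: D0)]).
    { simpl. exists A1, A2, D0. split; auto. }
    intros i Hi. destruct i; [|simpl in Hi; lia]. simpl.
    apply (rule_closed RImpL (A1 :: G) (A2 :: D0)
             [(A2 :: A1 :: G0, A2 :: D0); (A1 :: G0, A1 :: A2 :: D0)]).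
    { simpl. exists A1, A2, (A1 :: G0). split; [|reflexivity].
      eapply perm_trans. apply perm_skip. exact HG. apply perm_swap. }
    intros j Hj. rename j into i. rename Hj into Hi0. clear Hi. rename Hi0 into Hi. destruct i as [|[|i]]; simpl.
    + apply (IH2 _ _ (A1 :: G0) D0); apply Permutation_refl.
    + apply (IH1 _ _ G0 (A2 :: D0)); apply Permutation_refl.
    + simpl in Hi; lia.
  - apply (rule_closed RBox G D [(G, A :: D0); (boxes [A], [A])]).
    { simpl. exists G0, D0, [A], A. split; [|split; [exact HD|reflexivity]].
      eapply perm_trans. exact HG. apply Permutation_cons_append. }
    intros i Hi. destruct i as [|[|i]]; simpl.
    + apply (rule_closed RRefl G (A :: D0) [(A :: Box A :: G0, A :: D0)]).
      { simpl. exists A, G0. split; auto. }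
      intros i Hi'. destruct i; [|simpl in Hi'; lia]. simpl.
      apply (IH _ _ (Box A :: G0) D0); apply Permutation_refl.
    + apply (rule_closed RRefl [Box A] [A] [([A; Box A], [A])]).
      { simpl. exists A, []. split; auto. }
      intros i Hi'. destruct i; [|simpl in Hi'; lia]. simpl.
      apply (IH _ _ [Box A] []); apply Permutation_refl.
    + simpl in Hi; lia.
Qed.

Inductive cst := SX (b : bool) | SN1 (b : bool) | SN2 (b : bool) | SN3 | SN4.

Definition cG (Pi Gam : list form) (b : bool) := if b then Gam else boxes Pi.
Definition cD (Del : list form) (b : bool) := if b then Del else [].

Definition clab Pi A Gam Del (s : cst) : sequent * rkind :=
  match s with
  | SX b => ((cG Pi Gam b, A :: cD Del b), RCut)
  | SN1 b => ((cG Pi Gam b, Box (Imp A (Box A)) :: A :: cD Del b), RBox)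
  | SN2 b => ((cG Pi Gam b, Imp A (Box A) :: A :: cD Del b), RImpR)
  | SN3 => ((boxes Pi, [Imp A (Box A)]), RImpR)
  | SN4 => ((A :: boxes Pi, [Box A]), RBox)
  end.

Definition ext Pi A Gam Del (k : nat) : sequent :=
  match k with
  | 0 => (Box (Imp A (Box A)) :: Gam, A :: Del)
  | 1 => (Box (Imp A (Box A)) :: boxes Pi, [A])
  | 2 => (A :: Gam, Box A :: A :: Del)
  | 3 => (A :: boxes Pi, [Box A; A])
  | _ => (A :: boxes Pi, [A])
  end.

Definition cch (s : cst) (i : nat) : option (cst + nat) :=
  match s, i with
  | SX b, 0 => Some (inl (SN1 b))
  | SX b, 1 => Some (inr (if b then 0 else 1))
  | SN1 b, 0 => Some (inl (SN2 b))
  | SN1 b, 1 => Some (inl SN3)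
  | SN2 b, 0 => Some (inr (if b then 2 else 3))
  | SN3, 0 => Some (inl SN4)
  | SN4, 0 => Some (inr 4)
  | SN4, 1 => Some (inl (SX false))
  | _, _ => None
  end.

Definition cd (s : cst) : nat :=
  match s with SX _ => 3 | SN1 _ => 2 | SN2 _ => 0 | SN3 => 1 | SN4 => 0 end.

Lemma cyc_prog (st : nat -> cst) (f : nat -> nat) :
  (forall n, cch (st n) (f n) = Some (inl (st (S n)))) ->
  forall N, exists n, N <= n /\ st n = SN4.
Proof.
  intros Hch.
  assert (Hstep : forall n, st n = SN4 \/ cd (st (S n)) < cd (st n)).
  { intros n. pose proof (Hch n) as H.
    destruct (st n) eqn:E; [| | | |left; reflexivity]; right;
    destruct (f n) as [|[|m]]; simpl in H; try discriminate;
    injection H as H; rewrite <- H; simpl; lia. }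
  assert (Hk : forall k n, cd (st n) <= k -> exists m, n <= m /\ st m = SN4).
  { induction k as [|k IHk]; intros n Hn.
    - destruct (Hstep n) as [H|H]. exists n; auto. lia.
    - destruct (Hstep n) as [H|H]. exists n; auto.
      destruct (IHk (S n)) as [m [Hm1 Hm2]]. lia. exists m; split; [lia|exact Hm2]. }
  intros N. apply (Hk (cd (st N)) N). lia.
Qed.

Lemma cycle Pi A :
  (forall G' D' Gx Dx, Permutation G' ((boxes Pi ++ [Box (Imp A (Box A))]) ++ Gx) ->
     Permutation D' ([A] ++ Dx) -> GrzInf_cut G' D') ->
  forall Gam Gam0 Del, Permutation Gam (Gam0 ++ boxes Pi) -> GrzInf_cut Gam (A :: Del).
Proof.
  intros IH Gam Gam0 Del HGam.
  assert (HT : exists Tk : nat -> ptree, forall k, inf_proof (Tk k) /\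
     exists r', Tk k [] = Some (ext Pi A Gam Del k, r')).
  { apply (choose_trees (fun k T => inf_proof T /\ exists r', T [] = Some (ext Pi A Gam Del k, r'))).
    intros k.
    assert (Hc : GrzInf_cut (fst (ext Pi A Gam Del k)) (snd (ext Pi A Gam Del k))).
    { destruct k as [|[|[|[|k]]]]; simpl.
      - apply (IH _ _ Gam0 Del); [|apply Permutation_refl].
        eapply perm_trans. apply perm_skip. exact HGam.
        rewrite <- app_assoc. simpl.
        exact (Permutation_app_comm (Box (Imp A (Box A)) :: Gam0) (boxes Pi)).
      - apply (IH _ _ [] []); [|apply Permutation_refl].
        rewrite app_nil_r. apply Permutation_cons_append.
      - apply (ident A _ _ Gam (Box A :: Del)). apply Permutation_refl. apply perm_swap.
      - apply (ident A _ _ (boxes Pi) [Box A]). apply Permutation_refl. apply perm_swap.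
      - apply (ident A _ _ (boxes Pi) []); apply Permutation_refl. }
    destruct Hc as [T [r' [HT HT0]]]. exists T. split; auto. exists r'.
    rewrite HT0. destruct (ext Pi A Gam Del k); reflexivity. }
  destruct HT as [Tk HTk].
  apply (graft (clab Pi A Gam Del) cch Tk (fun k => proj1 (HTk k))) with (s0 := SX true).
  - intros s. destruct s as [b|b|b| |].
    + exists [(cG Pi Gam b, Box (Imp A (Box A)) :: A :: cD Del b);
              (Box (Imp A (Box A)) :: cG Pi Gam b, A :: cD Del b)].
      split. { simpl. eexists; reflexivity. }
      intros i. split.
      * intros Hi. destruct i as [|[|i]]; [| |simpl in Hi; lia].
        -- eexists; split; [reflexivity|]. reflexivity.
        -- eexists; split; [reflexivity|]. simpl.
           destruct (proj2 (HTk (if b then 0 else 1))) as [r' Hr']. exists r'. rewrite Hr'.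
           destruct b; reflexivity.
      * intros Hi. destruct i as [|[|i]]; simpl in Hi; try lia. reflexivity.
    + exists [(cG Pi Gam b, Imp A (Box A) :: A :: cD Del b); (boxes Pi, [Imp A (Box A)])].
      split.
      { simpl. exists (if b then Gam0 else []), (A :: cD Del b), Pi, (Imp A (Box A)).
        split; [|split; reflexivity]. destruct b; simpl. exact HGam. apply Permutation_refl. }
      intros i. split.
      * intros Hi. destruct i as [|[|i]]; [| |simpl in Hi; lia];
        (eexists; split; [reflexivity|]; reflexivity).
      * intros Hi. destruct i as [|[|i]]; simpl in Hi; try lia. reflexivity.
    + exists [(A :: cG Pi Gam b, Box A :: A :: cD Del b)].
      split. { simpl. exists A, (Box A), (A :: cD Del b). split; reflexivity. }
      intros i. split.
      * intros Hi. destruct i as [|i]; [|simpl in Hi; lia].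
        eexists; split; [reflexivity|]. simpl.
        destruct (proj2 (HTk (if b then 2 else 3))) as [r' Hr']. exists r'. rewrite Hr'.
        destruct b; reflexivity.
      * intros Hi. destruct i as [|i]; simpl in Hi; try lia. destruct b; destruct i; reflexivity.
    + exists [(A :: boxes Pi, [Box A])].
      split. { simpl. exists A, (Box A), []. split; reflexivity. }
      intros i. split.
      * intros Hi. destruct i as [|i]; [|simpl in Hi; lia].
        eexists; split; [reflexivity|]. reflexivity.
      * intros Hi. destruct i as [|i]; simpl in Hi; try lia. reflexivity.
    + exists [(A :: boxes Pi, [A]); (boxes Pi, [A])].
      split. { simpl. exists [A], [], Pi, A. split; [apply Permutation_refl|split; reflexivity]. }
      intros i. split.
      * intros Hi. destruct i as [|[|i]]; [| |simpl in Hi; lia].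
        -- eexists; split; [reflexivity|]. simpl.
           destruct (proj2 (HTk 4)) as [r' Hr']. exists r'. exact Hr'.
        -- eexists; split; [reflexivity|]. reflexivity.
      * intros Hi. destruct i as [|[|i]]; simpl in Hi; try lia. reflexivity.
  - intros st f Hch N. destruct (cyc_prog st f Hch N) as [n [Hn Hs]].
    exists n. split; [exact Hn|]. rewrite Hs. split; [|reflexivity].
    specialize (Hch n). rewrite Hs in Hch. destruct (f n) as [|[|m]]; simpl in Hch; try discriminate.
    reflexivity.
Qed.

Lemma main_gen G D : GrzSeq_cut G D -> forall G' D' Gx Dx,
  Permutation G' (G ++ Gx) -> Permutation D' (D ++ Dx) -> GrzInf_cut G' D'.
Proof.
  induction 1 as [G D G0 D0 A H H0|G D G0 H|G D G0 A B H _ IH1 _ IH2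
                 |G D D0 A B H _ IH|G D G0 B H _ IH|G D A _ IH1 _ IH2
                 |G D G0 D0 Pi A H H0 _ IH];
    intros G' D' Gx Dx HG HD.
  - apply (ident A G' D' (G0 ++ Gx) (D0 ++ Dx)).
    + eapply perm_trans. exact HG. exact (Permutation_app_tail Gx H).
    + eapply perm_trans. exact HD. exact (Permutation_app_tail Dx H0).
  - apply (rule_closed RBot G' D' []).
    + simpl. split; [reflexivity|]. exists (G0 ++ Gx).
      eapply perm_trans. exact HG. exact (Permutation_app_tail Gx H).
    + intros i Hi; simpl in Hi; lia.
  - apply (rule_closed RImpL G' D' [(B :: G0 ++ Gx, D'); (G0 ++ Gx, A :: D')]).
    + simpl. exists A, B, (G0 ++ Gx). split; [|reflexivity].
      eapply perm_trans. exact HG. exact (Permutation_app_tail Gx H).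
    + intros i Hi. destruct i as [|[|i]]; simpl.
      * apply (IH1 _ _ Gx Dx). apply Permutation_refl. exact HD.
      * apply (IH2 _ _ Gx Dx). apply Permutation_refl. simpl. apply perm_skip. exact HD.
      * simpl in Hi; lia.
  - apply (rule_closed RImpR G' D' [(A :: G', B :: D0 ++ Dx)]).
    + simpl. exists A, B, (D0 ++ Dx). split; [|reflexivity].
      eapply perm_trans. exact HD. exact (Permutation_app_tail Dx H).
    + intros i Hi. destruct i as [|i]; simpl.
      * apply (IH _ _ Gx Dx). simpl. apply perm_skip. exact HG. apply Permutation_refl.
      * simpl in Hi; lia.
  - apply (rule_closed RRefl G' D' [(B :: Box B :: G0 ++ Gx, D')]).
    + simpl. exists B, (G0 ++ Gx). split; [|reflexivity].
      eapply perm_trans. exact HG. exact (Permutation_app_tail Gx H).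
    + intros i Hi. destruct i as [|i]; simpl.
      * apply (IH _ _ Gx Dx). apply Permutation_refl. exact HD.
      * simpl in Hi; lia.
  - apply (rule_closed RCut G' D' [(G', A :: D'); (A :: G', D')]).
    + simpl. exists A. reflexivity.
    + intros i Hi. destruct i as [|[|i]]; simpl.
      * apply (IH1 _ _ Gx Dx). exact HG. simpl. apply perm_skip. exact HD.
      * apply (IH2 _ _ Gx Dx). simpl. apply perm_skip. exact HG. exact HD.
      * simpl in Hi; lia.
  - assert (HG' : Permutation G' ((G0 ++ Gx) ++ boxes Pi)).
    { eapply perm_trans. exact HG. eapply perm_trans. exact (Permutation_app_tail Gx H).
      rewrite <- !app_assoc. apply Permutation_app_head. apply Permutation_app_comm. }
    apply (rule_closed RBox G' D' [(G', A :: D0 ++ Dx); (boxes Pi, [A])]).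
    + simpl. exists (G0 ++ Gx), (D0 ++ Dx), Pi, A. split; [exact HG'|split; [|reflexivity]].
      eapply perm_trans. exact HD. exact (Permutation_app_tail Dx H0).
    + intros i Hi. destruct i as [|[|i]]; simpl.
      * exact (cycle Pi A IH G' (G0 ++ Gx) (D0 ++ Dx) HG').
      * exact (cycle Pi A IH (boxes Pi) [] [] (Permutation_refl _)).
      * simpl in Hi; lia.
Qed.

Theorem theorem3p4 (G D : list form) :
  GrzSeq_cut G D -> GrzInf_cut G D.
Proof.
  intros H. apply (main_gen G D H G D [] []); rewrite app_nil_r; apply Permutation_refl.
Qed.
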